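(* Let $\Lambda\neq 0$, $\kappa=8\pi G/c^4$, let $F$ be any continuous real function with $F(4\Lambda)=0$, let $c'\in\mathbb{R}$ be arbitrary, and let $$f(R)=\exp\Big(\frac{R}{2\Lambda}\Big)\Big[\int F(R)\exp\Big(-\frac{R}{2\Lambda}\Big)dR+c'\Big].$$ Then every vacuum solution of Einstein's field equations $R_{\mu\nu}-\tfrac12 Rg_{\mu\nu}+\Lambda g_{\mu\nu}=0$ is a vacuum solution of the $f(R)$ field equations $f'(R)R_{\mu\nu}-\tfrac12 f(R)g_{\mu\nu}-\nabla_\mu\nabla_\nu f'(R)+\square f'(R)g_{\mu\nu}=0$.
   Context: Metrics $g_{\mu\nu}$ are on a four-dimensional spacetime; $R_{\mu\nu}$ is the Ricci tensor, $R=g^{\mu\nu}R_{\mu\nu}$ the Ricci scalar, $\nabla$ the Levi-Civita connection and $\square=g^{\mu\nu}\nabla_\mu\nabla_\nu$. $\int F(R)\exp(-R/(2\Lambda))\,dR$ denotes a fixed antiderivative in $R$. A vacuum solution is one with vanishing stress-energy tensor. *)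

(* Defs.v *)
(* R : realType, points of a coordinate chart are 'rV[R]_4. *)
From HB Require Import structures.
From mathcomp Require Import all_boot all_order all_algebra.
From mathcomp Require Import all_classical all_reals all_analysis.
Set Implicit Arguments. Unset Strict Implicit. Unset Printing Implicit Defensive.
Import Order.TTheory GRing.Theory Num.Theory.
Import numFieldNormedType.Exports.
Local Open Scope classical_set_scope.
Local Open Scope ring_scope.

Definition pd {R : realType} (i : 'I_4) (h : 'rV[R]_4 -> R) (x : 'rV[R]_4) : R :=
  'D_(delta_mx 0 i) h x.

Definition ginv {R : realType} (g : 'rV[R]_4 -> 'M[R]_4) (x : 'rV[R]_4) : 'M[R]_4 :=
  invmx (g x).

Definition christoffel {R : realType} (g : 'rV[R]_4 -> 'M[R]_4) (l m n : 'I_4)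
  (x : 'rV[R]_4) : R :=
  2^-1 * \sum_(s < 4) ginv g x l s *
    (pd m (fun y => g y s n) x + pd n (fun y => g y s m) x - pd s (fun y => g y m n) x).

Definition ricci {R : realType} (g : 'rV[R]_4 -> 'M[R]_4) (m n : 'I_4) (x : 'rV[R]_4) : R :=
  \sum_(l < 4) (pd l (christoffel g l m n) x - pd n (christoffel g l m l) x
    + \sum_(s < 4) (christoffel g l l s x * christoffel g s m n x
                    - christoffel g l n s x * christoffel g s m l x)).

Definition ricci_scalar {R : realType} (g : 'rV[R]_4 -> 'M[R]_4) (x : 'rV[R]_4) : R :=
  \sum_(m < 4) \sum_(n < 4) ginv g x m n * ricci g m n x.

Definition cov_hess {R : realType} (g : 'rV[R]_4 -> 'M[R]_4) (phi : 'rV[R]_4 -> R)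
  (m n : 'I_4) (x : 'rV[R]_4) : R :=
  pd m (pd n phi) x - \sum_(l < 4) christoffel g l m n x * pd l phi x.

Definition box {R : realType} (g : 'rV[R]_4 -> 'M[R]_4) (phi : 'rV[R]_4 -> R)
  (x : 'rV[R]_4) : R :=
  \sum_(m < 4) \sum_(n < 4) ginv g x m n * cov_hess g phi m n x.

Definition eta {R : realType} : 'M[R]_4 :=
  diag_mx (\row_(i < 4) (if i == 0 then -1 else 1)).

Definition spacetime_metric {R : realType} (U : set 'rV[R]_4)
  (g : 'rV[R]_4 -> 'M[R]_4) : Prop :=
  open U /\
  forall x, U x ->
    (g x)^T = g x /\
    g x \in unitmx /\
    (exists P : 'M[R]_4, P \in unitmx /\ P^T *m g x *m P = eta) /\
    (forall i j : 'I_4, differentiable (fun y => g y i j) x /\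
       forall k : 'I_4, differentiable (pd k (fun y => g y i j)) x).

Definition einstein_vacuum {R : realType} (Lam : R) (U : set 'rV[R]_4)
  (g : 'rV[R]_4 -> 'M[R]_4) : Prop :=
  forall x, U x -> forall m n : 'I_4,
    ricci g m n x - 2^-1 * ricci_scalar g x * g x m n + Lam * g x m n = 0.

Definition fR_vacuum {R : realType} (f : R -> R) (U : set 'rV[R]_4)
  (g : 'rV[R]_4 -> 'M[R]_4) : Prop :=
  let phi := fun y => (derive1 f) (ricci_scalar g y) in
  forall x, U x -> forall m n : 'I_4,
    (derive1 f) (ricci_scalar g x) * ricci g m n x - 2^-1 * f (ricci_scalar g x) * g x m n
    - cov_hess g phi m n x + box g phi x * g x m n = 0.

(* Main.v *)
Require Import Defs.
From HB Require Import structures.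
From mathcomp Require Import all_boot all_order all_algebra.
From mathcomp Require Import all_classical all_reals all_analysis.
From mathcomp Require Import ring lra.
Import Order.TTheory GRing.Theory Num.Theory.
Import numFieldNormedType.Exports.
Local Open Scope classical_set_scope.
Local Open Scope ring_scope.

Lemma fderiv (R : realType) (Lam : R) (F A : R -> R) (c' : R) r :
  Lam != 0 ->
  (forall r : R, is_derive r 1 A (F r * expR (- (r / (2 * Lam))))) ->
  derive1 (fun r : R => expR (r / (2 * Lam)) * (A r + c')) r =
  (2 * Lam)^-1 * (expR (r / (2 * Lam)) * (A r + c')) + F r.
Proof.
move=> L0 hA.
pose k := (2 * Lam)^-1.
  have hh : is_derive r (1:R) (fun r : R => r * k) k.
    rewrite [X in is_derive _ _ _ X](_ : k = r *: (0:R) + k *: (1:R)).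
      exact: (@is_deriveM R R (@id R) (cst k) r 1 1 0).
    by rewrite scaler0 add0r /GRing.scale /= mulr1.
  have hE : is_derive r (1:R) (fun r : R => expR (r / (2 * Lam))) (expR (r/(2*Lam)) * k).
    have d1 : derivable (fun r : R => r * k) r 1 by case: hh.
    have d2 : derivable expR (r * k) 1 by case: (is_derive_expR (r*k)).
    apply: DeriveDef.
      apply/derivable1_diffP; apply: differentiable_comp; exact/derivable1_diffP.
    rewrite -derive1E.
    have := derive1_comp d1 d2. rewrite /comp => ->.
    rewrite !derive1E !derive_val.
    by [].
  have hAc : is_derive r (1:R) (fun r => A r + c') (F r * expR (- (r / (2 * Lam)))).
    rewrite -[X in is_derive _ _ _ X]addr0.
    exact: (@is_deriveD R R R A (cst c') r 1).
  have := @is_deriveM R R _ _ r 1 _ _ hE hAc.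
  move=> H; rewrite derive1E.
  rewrite (@derive_val _ _ _ _ _ _ _ H).
  transitivity (expR (r / (2 * Lam)) * (F r * expR (- (r / (2 * Lam)))) + (A r + c') * (expR (r / (2 * Lam)) * k)); first by [].
  have e1 : forall e : R, expR e * (F r * expR (- e)) = F r.
    by move=> e; rewrite expRN mulrCA mulfV ?expR_eq0 // mulr1.
  rewrite e1 /k mulrA mulrC; ring.
Qed.

Lemma trace4 (R : realType) (G : 'M[R]_4) :
  G^T = G -> G \in unitmx ->
  \sum_(m < 4) \sum_(n < 4) invmx G m n * G m n = 4.
Proof.
move=> hT hU.
have : \tr (invmx G *m G) = 4 by rewrite mulVmx // mxtrace1.
rewrite /mxtrace => <-; apply: eq_bigr => m _; rewrite mxE.
apply: eq_bigr => n _; congr (_ * _).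
by rewrite -[in LHS]hT mxE.
Qed.

Theorem mainTheorem6 (R : realType) (Lam : R) (F A : R -> R) (c' : R)
  (U : set 'rV[R]_4) (g : 'rV[R]_4 -> 'M[R]_4) :
  Lam != 0 ->
  continuous F ->
  F (4 * Lam) = 0 ->
  (forall r : R, is_derive r 1 A (F r * expR (- (r / (2 * Lam))))) ->
  spacetime_metric U g ->
  einstein_vacuum Lam U g ->
  fR_vacuum (fun r : R => expR (r / (2 * Lam)) * (A r + c')) U g.
Proof.
move=> L0 _ F0 hA [oU hg] hE.
set f := (fun r : R => expR (r / (2 * Lam)) * (A r + c')).
have hric : forall x, U x -> forall m n, ricci g m n x =
    (2^-1 * ricci_scalar g x - Lam) * g x m n.
  move=> x Ux m n; have := hE x Ux m n; move=> h.
  apply/eqP; rewrite -subr_eq0; apply/eqP; rewrite -h; ring.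
have hRs : forall x, U x -> ricci_scalar g x = 4 * Lam.
  move=> x Ux.
  have [hT [hu _]] := hg x Ux.
  have h4 := @trace4 _ _ hT hu.
  have : ricci_scalar g x = (2^-1 * ricci_scalar g x - Lam) * 4.
    rewrite -[in RHS]h4 big_distrr /=; rewrite {1}/ricci_scalar.
    apply: eq_bigr => m _; rewrite big_distrr; apply: eq_bigr => n _.
    by rewrite hric // /ginv mulrCA.
  move=> h; lra.
set phi := fun y => derive1 f (ricci_scalar g y).
set c := derive1 f (4 * Lam).
have hphi : forall y, U y -> phi y = c by move=> y Uy; rewrite /phi hRs.
have hpd : forall y, U y -> forall l, pd l phi y = 0.
  move=> y Uy l; rewrite /pd (@near_eq_derive _ _ _ _ (cst c)) ?derive_cst //.
  have := oU y Uy; apply: filterS => z Uz; exact: hphi.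
have hpd2 : forall y, U y -> forall l m, pd l (pd m phi) y = 0.
  move=> y Uy l m; rewrite /pd (@near_eq_derive _ _ _ _ (cst 0)) ?derive_cst //.
  have := oU y Uy; apply: filterS => z Uz; exact: hpd.
have hch : forall y, U y -> forall m n, cov_hess g phi m n y = 0.
  move=> y Uy m n; rewrite /cov_hess hpd2 // big1 ?subr0 // => l _.
  by rewrite hpd // mulr0.
move=> x Ux m n.
have hb : box g phi x = 0.
  by rewrite /box big1 // => i _; rewrite big1 // => j _; rewrite hch // mulr0.
rewrite hb hch // mul0r subr0 addr0 hric // hRs //.
have -> : derive1 f (4 * Lam) = (2 * Lam)^-1 * f (4 * Lam).
  by rewrite /f fderiv // F0 addr0.
field; exact: L0.
Qed.
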